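(* Consider problem (P) and assume it has an optimal solution $\mathbf{x}^*$ with an associated Lagrange multiplier $\mu^*>0$ for the resource constraint, and that Case 1 or Case 2 holds. Let $\mu^k\ge 0$ be arbitrary and put $\mathbf{x}^k:=\mathbf{x}(\mu^k)$. (i) If Case 1 holds and $\sum_{j\in J} g_j(x_j^k)<b$, then $x_j^*=l_j$ for all $j\in L(\mu^k)$. (ii) If Case 1 holds and $\sum_{j\in J} g_j(x_j^k)>b$, then $x_j^*=u_j$ for all $j\in U(\mu^k)$. (iii) If Case 2 holds and $\sum_{j\in J} g_j(x_j^k)<b$, then $x_j^*=u_j$ for all $j\in U(\mu^k)$. (iv) If Case 2 holds and $\sum_{j\in J} g_j(x_j^k)>b$, then $x_j^*=l_j$ for all $j\in L(\mu^k)$.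
   Context: Let $J=\{1,\dots,n\}$. For $j\in J$ let $\phi_j,g_j:\mathbb{R}\to\mathbb{R}$ be convex and continuously differentiable, with $\phi_j$ strictly convex, and let $-\infty<l_j<u_j<\infty$, $b\in\mathbb{R}$. Problem (P) is: minimize $\sum_{j\in J}\phi_j(x_j)$ subject to $\sum_{j\in J} g_j(x_j)\le b$ and $l_j\le x_j\le u_j$ for $j\in J$. A pair $(\mathbf{x}^*,\mu^* )$ is an optimal solution with Lagrange multiplier if $\mu^*\ge0$, $\sum_j g_j(x_j^* )\le b$, $\mu^*(\sum_j g_j(x_j^* )-b)=0$, $x_j^*\in[l_j,u_j]$, and for each $j$: $x_j^*=l_j$ if $\phi_j'(x_j^* )>-\mu^*g_j'(x_j^* )$, $x_j^*=u_j$ if $\phi_j'(x_j^* )<-\mu^*g_j'(x_j^* )$, and otherwise $\phi'_j(x_j^* )=-\mu^* g'_j(x_j^* )$ (i.e. $x_j^*$ minimizes $\phi_j+\mu^*g_j$ over $[l_j,u_j]$). For $\mu\ge 0$, $x_j(\mu)$ denotes the unique minimizer of $\phi_j(x_j)+\mu g_j(x_j)$ over $[l_j,u_j]$, and $\mathbf{x}(\mu)=(x_j(\mu))_{j\in J}$. Define $L(\mu):=\{j\in J: x_j(\mu)=l_j\}$ and $U(\mu):=\{j\in J: x_j(\mu)=u_j\}$. Assume $g_j'\neq0$ on $[l_j,u_j]$ and let $\mu_j(x):=-\phi_j'(x)/g_j'(x)$. Case 1: for all $j$, $g_j$ is decreasing and $\mu_j$ is strictly increasing on $[l_j,u_j]$.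 Case 2: for all $j$, $g_j$ is increasing and $\mu_j$ is strictly decreasing on $[l_j,u_j]$. *)

(* Defs.v *)
(* classical reals. Indices J = {1..n} are represented 0-based as j < n. *)
From Stdlib Require Import Reals Lra.
Open Scope R_scope.

Fixpoint sumJ (n : nat) (f : nat -> R) : R :=
  match n with
  | O => 0
  | S m => sumJ m f + f m
  end.

Definition convex (f : R -> R) : Prop :=
  forall x y t, 0 <= t <= 1 -> f (t * x + (1 - t) * y) <= t * f x + (1 - t) * f y.

Definition strictly_convex (f : R -> R) : Prop :=
  forall x y t, x <> y -> 0 < t < 1 ->
    f (t * x + (1 - t) * y) < t * f x + (1 - t) * f y.

Definition C1_with_deriv (f f' : R -> R) : Prop :=
  (forall x, derivable_pt_lim f x (f' x)) /\ continuity f'.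

Definition is_min_on (phi g : R -> R) (mu l u xj : R) : Prop :=
  l <= xj <= u /\
  forall y, l <= y <= u -> phi xj + mu * g xj <= phi y + mu * g y.

Definition opt_with_multiplier (n : nat) (phi' g g' : nat -> R -> R)
    (l u : nat -> R) (b : R) (xs : nat -> R) (mus : R) : Prop :=
  0 <= mus /\
  sumJ n (fun j => g j (xs j)) <= b /\
  mus * (sumJ n (fun j => g j (xs j)) - b) = 0 /\
  forall j, (j < n)%nat ->
    l j <= xs j <= u j /\
    (phi' j (xs j) > - mus * g' j (xs j) -> xs j = l j) /\
    (phi' j (xs j) < - mus * g' j (xs j) -> xs j = u j).
(* the "otherwise phi' = -mu g'" clause is automatic by trichotomy *)

Definition decreasing_on (f : R -> R) (l u : R) : Prop :=
  forall x y, l <= x <= u -> l <= y <= u -> x <= y -> f y <= f x.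
Definition increasing_on (f : R -> R) (l u : R) : Prop :=
  forall x y, l <= x <= u -> l <= y <= u -> x <= y -> f x <= f y.
Definition strictly_increasing_on (f : R -> R) (l u : R) : Prop :=
  forall x y, l <= x <= u -> l <= y <= u -> x < y -> f x < f y.
Definition strictly_decreasing_on (f : R -> R) (l u : R) : Prop :=
  forall x y, l <= x <= u -> l <= y <= u -> x < y -> f y < f x.

Definition muj (phi' g' : nat -> R -> R) (j : nat) (x : R) : R :=
  - phi' j x / g' j x.

Definition case1 (n : nat) (phi' g g' : nat -> R -> R) (l u : nat -> R) : Prop :=
  forall j, (j < n)%nat ->
    decreasing_on (g j) (l j) (u j) /\
    strictly_increasing_on (muj phi' g' j) (l j) (u j).

Definition case2 (n : nat) (phi' g g' : nat -> R -> R) (l u : nat -> R) : Prop :=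
  forall j, (j < n)%nat ->
    increasing_on (g j) (l j) (u j) /\
    strictly_decreasing_on (muj phi' g' j) (l j) (u j).

(* Main.v *)
Require Import Defs.
From Stdlib Require Import Reals Lra.
Open Scope R_scope.

Lemma DR f x d u : derivable_pt_lim f x d -> 0 < d -> x < u ->
  exists y, x < y <= u /\ f x < f y.
Proof.
  intros H Hd Hxu. destruct (H (d/2) ltac:(lra)) as [[del delpos] Hdel]. simpl in Hdel.
  set (h := Rmin (del/2) (u-x)).
  assert (hpos: 0 < h) by (unfold h; apply Rmin_glb_lt; lra).
  assert (hle1: h <= del/2) by apply Rmin_l. assert (hle2: h <= u-x) by apply Rmin_r.
  specialize (Hdel h ltac:(lra) ltac:(rewrite Rabs_pos_eq; lra)).
  exists (x+h). split. lra.
  set (q := (f (x+h) - f x)/h) in Hdel.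
  assert (Hq: f (x+h) - f x = q*h) by (unfold q; field; lra).
  apply Rabs_def2 in Hdel. nra.
Qed.

Lemma DL f x d l : derivable_pt_lim f x d -> 0 < d -> l < x ->
  exists y, l <= y < x /\ f y < f x.
Proof.
  intros H Hd Hxu. destruct (H (d/2) ltac:(lra)) as [[del delpos] Hdel]. simpl in Hdel.
  set (h := Rmin (del/2) (x-l)).
  assert (hpos: 0 < h) by (unfold h; apply Rmin_glb_lt; lra).
  assert (hle1: h <= del/2) by apply Rmin_l. assert (hle2: h <= x-l) by apply Rmin_r.
  specialize (Hdel (-h) ltac:(lra) ltac:(rewrite Rabs_Ropp, Rabs_pos_eq; lra)).
  exists (x+-h). split. lra.
  set (q := (f (x+-h) - f x)/(-h)) in Hdel.
  assert (Hq: f (x+-h) - f x = q*(-h)) by (unfold q; field; lra).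
  apply Rabs_def2 in Hdel. nra.
Qed.

Lemma min_foc (ph g ph' g' : R -> R) l u mu x :
  (forall y, derivable_pt_lim ph y (ph' y)) -> (forall y, derivable_pt_lim g y (g' y)) ->
  l <= x <= u ->
  (forall y, l <= y <= u -> ph x + mu * g x <= ph y + mu * g y) ->
  (l < x -> ph' x + mu * g' x <= 0) /\ (x < u -> 0 <= ph' x + mu * g' x).
Proof.
  intros Hp Hg Hx Hmin.
  assert (HD : derivable_pt_lim (fun y => ph y + mu * g y) x (ph' x + mu * g' x)).
  { apply (derivable_pt_lim_plus ph (mult_real_fct mu g)); [apply Hp|].
    apply derivable_pt_lim_scal. apply Hg. }
  split; intro H.
  - destruct (Rle_or_lt (ph' x + mu * g' x) 0) as [|Hlt]; [assumption|].
    destruct (DL _ _ _ _ HD Hlt H) as [y [Hy1 Hy2]].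
    specialize (Hmin y ltac:(lra)). lra.
  - destruct (Rle_or_lt 0 (ph' x + mu * g' x)) as [|Hlt]; [assumption|].
    assert (HD' := derivable_pt_lim_opp _ _ _ HD).
    destruct (DR _ _ (- (ph' x + mu * g' x)) u HD' ltac:(lra) H) as [y [Hy1 Hy2]].
    specialize (Hmin y ltac:(lra)). unfold opp_fct in Hy2. lra.
Qed.

Lemma dec_sign g g' l u x : decreasing_on g l u -> (forall y, derivable_pt_lim g y (g' y)) ->
  l < u -> l <= x <= u -> g' x <= 0.
Proof.
  intros Hdec Hg Hlu Hx.
  destruct (Rle_or_lt (g' x) 0) as [|Hlt]; [assumption|].
  destruct (Rlt_or_le x u) as [Hxu|Hxu].
  - destruct (DR _ _ _ _ (Hg x) Hlt Hxu) as [y [Hy1 Hy2]].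
    specialize (Hdec x y Hx ltac:(lra) ltac:(lra)). lra.
  - destruct (DL _ _ _ l (Hg x) Hlt ltac:(lra)) as [y [Hy1 Hy2]].
    specialize (Hdec y x ltac:(lra) Hx ltac:(lra)). lra.
Qed.

Lemma inc_sign g g' l u x : increasing_on g l u -> (forall y, derivable_pt_lim g y (g' y)) ->
  l < u -> l <= x <= u -> 0 <= g' x.
Proof.
  intros Hinc Hg Hlu Hx.
  assert (H := dec_sign (fun y => - g y) (fun y => - g' y) l u x).
  enough (- g' x <= 0) by lra. apply H; auto.
  - intros a c Ha Hc Hac. specialize (Hinc a c Ha Hc Hac). lra.
  - intro y. apply (derivable_pt_lim_opp g). apply Hg.
Qed.

Lemma conv1 (ph' g' : R -> R) mu x l u : g' x < 0 ->
  (l < x -> ph' x + mu * g' x <= 0) -> (x < u -> 0 <= ph' x + mu * g' x) ->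
  (l < x -> - ph' x / g' x <= mu) /\ (x < u -> mu <= - ph' x / g' x).
Proof.
  intros Hs H1 H2. set (m := - ph' x / g' x).
  assert (E : ph' x = - m * g' x) by (unfold m; field; lra).
  rewrite E in H1, H2. split; intro H; [specialize (H1 H)|specialize (H2 H)]; nra.
Qed.

Lemma conv2 (ph' g' : R -> R) mu x l u : 0 < g' x ->
  (l < x -> ph' x + mu * g' x <= 0) -> (x < u -> 0 <= ph' x + mu * g' x) ->
  (l < x -> mu <= - ph' x / g' x) /\ (x < u -> - ph' x / g' x <= mu).
Proof.
  intros Hs H1 H2. set (m := - ph' x / g' x).
  assert (E : ph' x = - m * g' x) by (unfold m; field; lra).
  rewrite E in H1, H2. split; intro H; [specialize (H1 H)|specialize (H2 H)]; nra.
Qed.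

Lemma sumJ_le n f g : (forall j, (j < n)%nat -> f j <= g j) -> sumJ n f <= sumJ n g.
Proof.
  induction n; simpl; intros H. lra.
  assert (sumJ n f <= sumJ n g) by (apply IHn; intros; apply H; auto).
  specialize (H n ltac:(auto)). lra.
Qed.
Theorem proposition1
  (n : nat) (phi phi' g g' : nat -> R -> R) (l u : nat -> R) (b : R)
  (Hphi : forall j, (j < n)%nat ->
     C1_with_deriv (phi j) (phi' j) /\ convex (phi j) /\ strictly_convex (phi j))
  (Hg : forall j, (j < n)%nat -> C1_with_deriv (g j) (g' j) /\ convex (g j))
  (Hlu : forall j, (j < n)%nat -> l j < u j)
  (Hg'nz : forall j, (j < n)%nat -> forall x, l j <= x <= u j -> g' j x <> 0)
  (xs : nat -> R) (mus : R)
  (Hopt : opt_with_multiplier n phi' g g' l u b xs mus)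
  (Hmus : 0 < mus)
  (Hcase : case1 n phi' g g' l u \/ case2 n phi' g g' l u)
  (muk : R) (Hmuk : 0 <= muk)
  (xk : nat -> R)
  (Hxk : forall j, (j < n)%nat -> is_min_on (phi j) (g j) muk (l j) (u j) (xk j)) :
  (case1 n phi' g g' l u -> sumJ n (fun j => g j (xk j)) < b ->
     forall j, (j < n)%nat -> xk j = l j -> xs j = l j) /\
  (case1 n phi' g g' l u -> sumJ n (fun j => g j (xk j)) > b ->
     forall j, (j < n)%nat -> xk j = u j -> xs j = u j) /\
  (case2 n phi' g g' l u -> sumJ n (fun j => g j (xk j)) < b ->
     forall j, (j < n)%nat -> xk j = u j -> xs j = u j) /\
  (case2 n phi' g g' l u -> sumJ n (fun j => g j (xk j)) > b ->
     forall j, (j < n)%nat -> xk j = l j -> xs j = l j).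
Proof.
  destruct Hopt as [Hmus0 [HS [Hcs Hkkt]]].
  assert (HSb : sumJ n (fun j => g j (xs j)) = b).
  { destruct (Rmult_integral _ _ Hcs) as [H|H]; lra. }
  pose (K i mu x := l i <= x <= u i /\ (l i < x -> phi' i x + mu * g' i x <= 0)
                    /\ (x < u i -> 0 <= phi' i x + mu * g' i x)).
  assert (Cs : forall i, (i < n)%nat -> K i mus (xs i)).
  { intros i Hi. destruct (Hkkt i Hi) as [Hb [H1 H2]]. unfold K.
    split; [exact Hb|split; intro H].
    - destruct (Rle_or_lt (phi' i (xs i) + mus * g' i (xs i)) 0) as [|Hlt]; [assumption|].
      assert (xs i = l i) by (apply H1; nra). lra.
    - destruct (Rle_or_lt 0 (phi' i (xs i) + mus * g' i (xs i))) as [|Hlt]; [assumption|].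
      assert (xs i = u i) by (apply H2; nra). lra. }
  assert (Ck : forall i, (i < n)%nat -> K i muk (xk i)).
  { intros i Hi. destruct (Hxk i Hi) as [Hb Hm]. destruct (Hphi i Hi) as [[Dp _] _].
    destruct (Hg i Hi) as [[Dg _] _]. unfold K. split; [exact Hb|].
    apply (min_foc (phi i) (g i) (phi' i) (g' i) (l i) (u i)); auto. }
  assert (M1 : case1 n phi' g g' l u -> forall i, (i < n)%nat -> forall mu x, K i mu x ->
     (l i < x -> muj phi' g' i x <= mu) /\ (x < u i -> mu <= muj phi' g' i x)).
  { intros Hc i Hi mu x [Hx [H1 H2]]. destruct (Hc i Hi) as [Hd _].
    destruct (Hg i Hi) as [[Dg _] _].
    assert (g' i x <= 0) by (apply (dec_sign (g i) _ (l i) (u i)); auto).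
    assert (g' i x <> 0) by (apply Hg'nz; auto).
    unfold muj. apply (conv1 (phi' i) (g' i) mu x (l i) (u i)); auto. lra. }
  assert (M2 : case2 n phi' g g' l u -> forall i, (i < n)%nat -> forall mu x, K i mu x ->
     (l i < x -> mu <= muj phi' g' i x) /\ (x < u i -> muj phi' g' i x <= mu)).
  { intros Hc i Hi mu x [Hx [H1 H2]]. destruct (Hc i Hi) as [Hd _].
    destruct (Hg i Hi) as [[Dg _] _].
    assert (0 <= g' i x) by (apply (inc_sign (g i) _ (l i) (u i)); auto).
    assert (g' i x <> 0) by (apply Hg'nz; auto).
    unfold muj. apply (conv2 (phi' i) (g' i) mu x (l i) (u i)); auto. lra. }
  assert (Mono1 : case1 n phi' g g' l u -> forall i, (i < n)%nat -> forall mu1 mu2 x1 x2,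
     mu1 <= mu2 -> K i mu1 x1 -> K i mu2 x2 -> x1 <= x2).
  { intros Hc i Hi mu1 mu2 x1 x2 Hmu HK1 HK2.
    destruct (Rle_or_lt x1 x2) as [|Hlt]; [assumption|exfalso].
    destruct (M1 Hc i Hi _ _ HK1) as [A1 _]. destruct (M1 Hc i Hi _ _ HK2) as [_ A2].
    destruct HK1 as [B1 _]. destruct HK2 as [B2 _].
    destruct (Hc i Hi) as [_ Hsi].
    specialize (Hsi x2 x1 B2 B1 Hlt). specialize (A1 ltac:(lra)). specialize (A2 ltac:(lra)).
    lra. }
  assert (Mono2 : case2 n phi' g g' l u -> forall i, (i < n)%nat -> forall mu1 mu2 x1 x2,
     mu1 <= mu2 -> K i mu1 x1 -> K i mu2 x2 -> x2 <= x1).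
  { intros Hc i Hi mu1 mu2 x1 x2 Hmu HK1 HK2.
    destruct (Rle_or_lt x2 x1) as [|Hlt]; [assumption|exfalso].
    destruct (M2 Hc i Hi _ _ HK1) as [_ A1]. destruct (M2 Hc i Hi _ _ HK2) as [A2 _].
    destruct HK1 as [B1 _]. destruct HK2 as [B2 _].
    destruct (Hc i Hi) as [_ Hsi].
    specialize (Hsi x1 x2 B1 B2 Hlt). specialize (A1 ltac:(lra)). specialize (A2 ltac:(lra)).
    lra. }
  split; [|split; [|split]]; intros Hc Hsum j Hj Hxkj;
    destruct (Cs j Hj) as [[Bl Bu] _].
  -
    destruct (Rle_lt_or_eq_dec _ _ Bl) as [Hgt|Heq]; [exfalso|auto].
    destruct (M1 Hc j Hj _ _ (Cs j Hj)) as [A1 _].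
    destruct (M1 Hc j Hj _ _ (Ck j Hj)) as [_ A2].
    destruct (Hc j Hj) as [_ Hsi]. destruct (Cs j Hj) as [Bs _].
    assert (Hl : l j <= l j <= u j) by (specialize (Hlu j Hj); lra).
    specialize (Hsi _ _ Hl Bs Hgt). specialize (A1 Hgt).
    rewrite Hxkj in A2. specialize (A2 (Hlu j Hj)).
    assert (sumJ n (fun j => g j (xs j)) <= sumJ n (fun j => g j (xk j))); [|lra].
    apply sumJ_le. intros i Hi. destruct (Hc i Hi) as [Hd _].
    destruct (Cs i Hi) as [Bs' _]. destruct (Ck i Hi) as [Bk _].
    apply Hd; auto. apply (Mono1 Hc i Hi muk mus); auto. lra.
  -
    destruct (Rle_lt_or_eq_dec _ _ Bu) as [Hlt'|Heq]; [exfalso|auto].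
    destruct (M1 Hc j Hj _ _ (Cs j Hj)) as [_ A1].
    destruct (M1 Hc j Hj _ _ (Ck j Hj)) as [A2 _].
    destruct (Hc j Hj) as [_ Hsi]. destruct (Cs j Hj) as [Bs _].
    assert (Hl : l j <= u j <= u j) by (specialize (Hlu j Hj); lra).
    specialize (Hsi _ _ Bs Hl Hlt'). specialize (A1 Hlt').
    rewrite Hxkj in A2. specialize (A2 (Hlu j Hj)).
    assert (sumJ n (fun j => g j (xk j)) <= sumJ n (fun j => g j (xs j))); [|lra].
    apply sumJ_le. intros i Hi. destruct (Hc i Hi) as [Hd _].
    destruct (Cs i Hi) as [Bs' _]. destruct (Ck i Hi) as [Bk _].
    apply Hd; auto. apply (Mono1 Hc i Hi mus muk); auto. lra.
  -
    destruct (Rle_lt_or_eq_dec _ _ Bu) as [Hlt'|Heq]; [exfalso|auto].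
    destruct (M2 Hc j Hj _ _ (Cs j Hj)) as [_ A1].
    destruct (M2 Hc j Hj _ _ (Ck j Hj)) as [A2 _].
    destruct (Hc j Hj) as [_ Hsi]. destruct (Cs j Hj) as [Bs _].
    assert (Hl : l j <= u j <= u j) by (specialize (Hlu j Hj); lra).
    specialize (Hsi _ _ Bs Hl Hlt'). specialize (A1 Hlt').
    rewrite Hxkj in A2. specialize (A2 (Hlu j Hj)).
    assert (sumJ n (fun j => g j (xs j)) <= sumJ n (fun j => g j (xk j))); [|lra].
    apply sumJ_le. intros i Hi. destruct (Hc i Hi) as [Hd _].
    destruct (Cs i Hi) as [Bs' _]. destruct (Ck i Hi) as [Bk _].
    apply Hd; auto. apply (Mono2 Hc i Hi muk mus); auto. lra.
  -
    destruct (Rle_lt_or_eq_dec _ _ Bl) as [Hgt|Heq]; [exfalso|auto].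
    destruct (M2 Hc j Hj _ _ (Cs j Hj)) as [A1 _].
    destruct (M2 Hc j Hj _ _ (Ck j Hj)) as [_ A2].
    destruct (Hc j Hj) as [_ Hsi]. destruct (Cs j Hj) as [Bs _].
    assert (Hl : l j <= l j <= u j) by (specialize (Hlu j Hj); lra).
    specialize (Hsi _ _ Hl Bs Hgt). specialize (A1 Hgt).
    rewrite Hxkj in A2. specialize (A2 (Hlu j Hj)).
    assert (sumJ n (fun j => g j (xk j)) <= sumJ n (fun j => g j (xs j))); [|lra].
    apply sumJ_le. intros i Hi. destruct (Hc i Hi) as [Hd _].
    destruct (Cs i Hi) as [Bs' _]. destruct (Ck i Hi) as [Bk _].
    apply Hd; auto. apply (Mono2 Hc i Hi mus muk); auto. lra.
Qed.
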